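(* Let $(V,\omega)$ be a finite-dimensional super vector space over $\mathbb{Q}$ with an odd constant symplectic form. Then \[ \Lambda_{\gamma,\nu}[V]:=(\mathbb{Q}_+[\gamma,\nu]\otimes V^* )\oplus(\mathbb{Q}[\gamma,\nu]\otimes\mathfrak{h}_{\geq 2})\oplus\Big(\mathbb{Q}[\gamma,\nu]\otimes\bigoplus_{i=2}^\infty \big[(\mathfrak{h}_{\geq 1})^{\otimes i}\big]_{S_i}\Big) \] is a differential graded Lie subalgebra of $\mathfrak{l}'$; in particular it is a differential graded Lie algebra with the differential induced by $d=\gamma\cdot\delta+\Delta$.
   Context: Work over $\mathbb{Q}$ with super vector spaces. $\mathfrak{h}=\mathfrak{h}[V]=\mathrm{DR}^0(V)=\bigoplus_{i\ge0}((V^* )^{\otimes i})_{\mathbb{Z}/i}$ is the space of noncommutative $0$-forms (cyclic words in $V^*$) with its odd bracket $\{-,-\}$ and odd cobracket $\Delta$ (given, in coordinates $x_1..x_n$ even, $\xi_1..\xi_n$ odd with $\omega=\sum dx_id\xi_i$ and $\langle x_i,\xi_j\rangle^{-1}=\langle\xi_j,x_i\rangle^{-1}=\delta_{ij}$, by: $\{a_1\cdots a_n,b_1\cdots b_m\}=\sum_{i,j}\pm\langle a_i,b_j\rangle^{-1}(z_{n-1}^{i-1}[a_1\cdots\widehat{a_i}\cdots a_n])(z_{m-1}^{j-1}[b_1\cdots\widehat{b_j}\cdots b_m])$, $z_k=(k\;k-1\cdots1)$, and $\Delta(a_1\cdots a_n)=\frac12\sum_{i<j}\pm\langle a_i,a_j\rangle^{-1}[1+(1\,2)][(a_{i+1}\cdots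 a_{j-1})\otimes(a_{j+1}\cdots a_na_1\cdots a_{i-1})]$, with Koszul signs). $\mathfrak{l}:=\mathbb{Q}[\gamma]\otimes S(\mathfrak{h})$ is the differential graded Lie algebra with the odd bracket obtained by extending $\{-,-\}$ to the symmetric algebra $S(\mathfrak{h})$ by the Leibniz rule (and $\mathbb{Q}[\gamma]$-linearly), and differential $d=\gamma\delta+\Delta$, where $\delta$ is the Chevalley–Eilenberg differential $\delta(g_1\cdots g_n)=\sum_{i<j}\pm\{g_i,g_j\}g_1\cdots\widehat{g_i}\cdots\widehat{g_j}\cdots g_n$ and $\Delta$ is the cobracket extended to $S(\mathfrak{h})$ as a derivation of the product. Notation: $\mathfrak{h}_{\ge n}:=\bigoplus_{i\ge n}((V^* )^{\otimes i})_{\mathbb{Z}/i}$, so $\mathfrak{h}=\mathbb{Q}\oplus\mathfrak{h}_{\ge1}$ and $\mathfrak{h}_{\ge1}=V^*\oplus\mathfrak{h}_{\ge2}$. Identifying $S(\mathbb{Q})$ with $\mathbb{Q}[\nu]$ (where $\nu$ is the constant $0$-form $1\in\mathfrak{h}$), $\mathfrak{l}=\mathbb{Q}[\gamma,\nu]\otimes S(\mathfrak{h}_{\ge1})$; the bracket and differential are $\mathbb{Q}[\gamma,\nu]$-linear. The summand $\mathbb{Q}[\gamma,\nu]=\mathbb{Q}[\gamma,\nu]\otimes S^0(\mathfrak{h}_{\ge1})$ is an ideal with trivial bracket, and $\mathfrak{l}':=\mathbb{Q}[\gamma,\nu]\otimes\bigoplus_{i\ge1}[(\mathfrak{h}_{\ge1})^{\otimes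 i}]_{S_i}$ is the quotient differential graded Lie algebra. $\mathbb{Q}_+[\gamma,\nu]$ is the ideal of polynomials vanishing at the origin. *)

(* Defs.v *)
From HB Require Import structures.
From mathcomp Require Import all_boot all_order all_algebra.
From mathcomp Require Import monalg.

Set Implicit Arguments.
Unset Strict Implicit.
Unset Printing Implicit Defensive.

Import GRing.Theory.
Local Open Scope ring_scope.

(* (V, omega) in Darboux coordinates: x_1..x_n even, xi_1..xi_n odd,   *)
(* omega = sum dx_i dxi_i.  The letters (basis of V^* ) are encoded as *)
(* (i, false) = x_i (even) and (i, true) = xi_i (odd).                 *)
Section Construction.
Variable n : nat.

Definition letter := ('I_n * bool)%type.
Definition word := seq letter.

Definition lpar (a : letter) : bool := a.2.
Definition wpar (w : word) : bool := foldr addb false (map lpar w).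
Definition spar (ws : seq word) : bool := foldr addb false (map wpar ws).

Definition pairing (a b : letter) : rat :=
  if (a.1 == b.1) && (a.2 != b.2) then 1 else 0.
Definition pairing_at (a : word) (i : nat) (b : word) (j : nat) : rat :=
  match drop i a, drop j b with
  | x :: _, y :: _ => pairing x y
  | _, _ => 0
  end.

Definition ksign (b : bool) : rat := if b then -1 else 1.

(* Koszul sign of the rotation  rot k w = drop k w ++ take k w  *)
Definition rotsign (w : word) (k : nat) : bool :=
  wpar (take k w) && wpar (drop k w).

(* ---- cyclic words: the class of w in ((V^* )^{(x) l})_{Z/l} ------- *)
Definition wkey (w : word) : nat := pickle w.
Definition cyc_rep (w : word) : word :=
  foldr (fun u m => if (wkey u < wkey m)%N then u else m) w
        [seq rot k w | k <- iota 0 (size w)].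
(* the class of w vanishes iff some rotation fixes w with sign -1 *)
Definition cyc_zero (w : word) : bool :=
  has (fun k => (rot k w == w) && rotsign w k) (iota 0 (size w)).
Definition cyc_idx (w : word) : nat :=
  find (fun k => rot k w == cyc_rep w) (iota 0 (size w)).
(* [w] = c * [cyc_rep w] *)
Definition cyc (w : word) : rat * word :=
  (if cyc_zero w then 0 else ksign (rotsign w (cyc_idx w)), cyc_rep w).

(* ---- monomials of Q[gamma,nu] (x) S(h_{>=1}) ---------------------- *)
(* (g, k, ws) stands for gamma^g nu^k ws_0 ws_1 ... ; the nu factor    *)
(* is the constant 0-form 1 in h (empty cyclic word).                  *)
Definition mono := (nat * nat * seq word)%type.
Definition lalg := {malg rat[mono]}.

(* graded-commutative sorting (insertion sort with Koszul sign) *)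
Fixpoint ins (u : word) (s : seq word) : bool * seq word :=
  match s with
  | [::] => (false, [:: u])
  | v :: s' => if (wkey v < wkey u)%N then
                 let: (b, t) := ins u s' in (b (+) (wpar u && wpar v), v :: t)
               else (false, u :: s)
  end.
Fixpoint ssort (s : seq word) : bool * seq word :=
  match s with
  | [::] => (false, [::])
  | u :: s' => let: (b, t) := ssort s' in
               let: (b', t') := ins u t in (b (+) b', t')
  end.

(* a repeated odd factor (odd elements square to zero in S) *)
Definition repodd (s : seq word) : bool :=
  has (fun i => (nth [::] s i == nth [::] s i.+1) && wpar (nth [::] s i))
      (iota 0 (size s).-1).

(* normal form of  c * gamma^g nu^k ws  in l' = l / (Q[gamma,nu] (x) S^0) *)
Definition norm (c : rat) (m : mono) : lalg :=
  let: (g, k, ws) := m in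
  let cs := map cyc ws in
  let c' := c * \prod_(p <- cs) p.1 in
  let ne := [seq p.2 | p <- cs & p.2 != [::]] in
  let k' := (k + count (fun p => p.2 == [::]) cs)%N in
  let: (b, srt) := ssort ne in
  if (srt == [::]) || repodd srt then 0
  else << (c' * ksign b) *g ((g, k', srt) : mono) >>.

Definition normal (m : mono) : bool :=
  let: (g, k, ws) := m in
  [&& ws != [::],
      all (fun w => [&& w != [::], cyc_rep w == w & ~~ cyc_zero w]) ws,
      sorted (fun u v => (wkey u <= wkey v)%N) ws & ~~ repodd ws].

Definition rem_at (i : nat) (s : seq word) := take i s ++ drop i.+1 s.

(* ---- the odd bracket on h (on representatives) ------------------ *)
(* {a_1..a_p, b_1..b_q} = sum_{i,j} +- <a_i,b_j>^{-1}                 *)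
(*        [a_{i+1}..a_p a_1..a_{i-1} b_{j+1}..b_q b_1..b_{j-1}]        *)
Definition hbr (a b : word) : seq (rat * word) :=
  [seq (ksign (rotsign a i.+1 (+) rotsign b j) * pairing_at a i b j,
        take (size a).-1 (rot i.+1 a) ++ behead (rot j b))
  | i <- iota 0 (size a), j <- iota 0 (size b)].

(* ---- the cobracket on h, with values in S^2(h) ------------------ *)
(* Delta(a_1..a_p) = sum_{i<j} +- <a_i,a_j>^{-1}                       *)
(*                    (a_{i+1}..a_{j-1}) . (a_{j+1}..a_p a_1..a_{i-1})  *)
(* (the image in S^2 h of (1/2)[1+(12)] applied to the tensor)         *)
Definition hcobr (a : word) : seq (rat * (word * word)) :=
  [seq let u := take (j - i.+1)%N (drop i.+1 a) in
       (ksign (rotsign a i (+) (wpar (take 1 (drop j a)) && wpar u))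
          * pairing_at a i a j,
        (u, drop j.+1 a ++ take i a))
  | i <- iota 0 (size a), j <- iota i.+1 (size a - i.+1)%N].

(* ---- bracket on S(h) extended by the Leibniz rule ---------------- *)
Definition mbr (m1 m2 : mono) : lalg :=
  let: (g1, k1, ws) := m1 in
  let: (g2, k2, vs) := m2 in
  \sum_(i <- iota 0 (size ws)) \sum_(j <- iota 0 (size vs))
    let u := nth [::] ws i in
    let v := nth [::] vs j in
    let s := (wpar u && spar (drop i.+1 ws)) (+) (wpar v && spar (take j vs)) in
    \sum_(t <- hbr u v)
      norm (ksign s * t.1) ((g1 + g2)%N, (k1 + k2)%N, rem_at i ws ++ t.2 :: rem_at j vs).

(* ---- gamma * delta  (delta = Chevalley-Eilenberg differential) ---- *)
Definition mdelta (m : mono) : lalg :=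
  let: (g, k, ws) := m in
  \sum_(i <- iota 0 (size ws)) \sum_(j <- iota 0 (size ws) | (i < j)%N)
    let u := nth [::] ws i in
    let v := nth [::] ws j in
    let s := (wpar u && spar (take i ws)) (+) (wpar v && spar (rem_at i (take j ws))) in
    \sum_(t <- hbr u v)
      norm (ksign s * t.1) (g.+1, k, t.2 :: rem_at i (rem_at j ws)).

(* ---- Delta extended to S(h) as a derivation ---------------------- *)
Definition mDelta (m : mono) : lalg :=
  let: (g, k, ws) := m in
  \sum_(i <- iota 0 (size ws))
    \sum_(t <- hcobr (nth [::] ws i))
      norm (ksign (spar (take i ws)) * t.1)
           (g, k, take i ws ++ t.2.1 :: t.2.2 :: drop i.+1 ws).

Definition lbr (X Y : lalg) : lalg :=
  \sum_(m1 <- finmap.enum_fset (msupp X)) \sum_(m2 <- finmap.enum_fset (msupp Y)) (X@_m1 * Y@_m2) *: mbr m1 m2.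

Definition ldiff (X : lalg) : lalg :=
  \sum_(m <- finmap.enum_fset (msupp X)) X@_m *: (mdelta m + mDelta m).

Definition in_l' (X : lalg) : bool := all normal (finmap.enum_fset (msupp X)).

Definition lam_mono (m : mono) : bool :=
  let: (g, k, ws) := m in
  normal m && [|| (1 < size ws)%N, (1 < size (head [::] ws))%N | (0 < g + k)%N].
Definition in_Lambda (X : lalg) : bool := all lam_mono (finmap.enum_fset (msupp X)).

End Construction.

(* Main.v *)
Require Import Defs.
From mathcomp Require Import all_boot all_order all_algebra.
From mathcomp Require Import monalg.
From mathcomp Require Import finmap.
From mathcomp Require Import zify.
Local Open Scope ring_scope.
Import GRing.Theory.
Section W.
Variable n : nat.
Implicit Types (w u v : word n) (s : seq (word n)).

Lemma wpar_cat (s1 s2 : word n) : wpar (s1 ++ s2) = wpar s1 (+) wpar s2.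
Proof. by elim: s1 => //= a s1 IH; rewrite /wpar /= -/(wpar _) IH addbA. Qed.

Lemma wpar_cons (a : letter n) (s : word n) : wpar (a :: s) = lpar a (+) wpar s.
Proof. by []. Qed.

Lemma wpar_rot k w : wpar (rot k w) = wpar w.
Proof. by rewrite /rot wpar_cat -[in RHS](cat_take_drop k w) wpar_cat addbC. Qed.

Lemma cyc_zero_rot1 w : cyc_zero w -> cyc_zero (rot 1 w).
Proof.
case: w => [//|a s]; rewrite /cyc_zero => /hasP[k]; rewrite mem_iota add0n => /andP[_ Hk].
case/andP=> /eqP Hrot Hs.
have k0 : k != 0%N by apply/eqP=> k0; move: Hs; rewrite k0 /rotsign take0.
apply/hasP; exists k; first by rewrite mem_iota add0n size_rot.
apply/andP; split; first by rewrite rot_rot Hrot.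
have Hnth : nth a (a :: s) k = a.
  have := congr1 (head a) Hrot; rewrite /rot (drop_nth a) //=.
have Hrot1 : rot 1 (a :: s) = rcons s a by rewrite /rot /= drop0 take0 cats1.
rewrite Hrot1.
have Ht : wpar (take k (rcons s a)) = wpar (take k (a :: s)).
  case: k k0 Hk Hnth {Hrot Hs} => [//|k] _ /= Hk Hnth.
  rewrite -cats1 takel_cat; last by [].
  rewrite (take_nth a) // -cats1 wpar_cat Hnth wpar_cons /wpar /= addbF addbC //.
have Htot : forall y : word n, wpar (drop k y) = wpar y (+) wpar (take k y).
  by move=> y; rewrite -{2}(cat_take_drop k y) wpar_cat addbC addKb.
move: Hs; rewrite /rotsign !Htot Ht -Hrot1 !wpar_rot //.
Qed.

Lemma cyc_zero_rot m w : cyc_zero w -> cyc_zero (rot m w).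
Proof.
move=> H; case: (leqP (size w) m) => Hm; first by rewrite rot_oversize.
elim: m Hm => [|m IH] Hm; first by rewrite rot0.
rewrite -add1n rotD; last by rewrite add1n ltnW.
by apply: cyc_zero_rot1; apply: IH; rewrite ltnW.
Qed.

Lemma cyc_zero_rotE m w : cyc_zero (rot m w) = cyc_zero w.
Proof.
apply/idP/idP; last exact: cyc_zero_rot.
by move=> /(cyc_zero_rot (size (rot m w) - m)); rewrite -/(rotr m _) rotK.
Qed.

Definition key_min (x : word n) (s : seq (word n)) :=
  foldr (fun u m => if (wkey u < wkey m)%N then u else m) x s.

Lemma key_min_spec x s : key_min x s \in x :: s /\
  forall u, u \in x :: s -> (wkey (key_min x s) <= wkey u)%N.
Proof.
elim: s => [|a s [IH1 IH2]] /=; first by split=> [|u]; rewrite ?inE ?mem_head // => /eqP->.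
case: ifP => H; split.
- by rewrite !inE eqxx orbT.
- move=> u; rewrite !inE => /or3P[/eqP->|/eqP->|Hu].
  + by apply: ltnW; apply: leq_trans H (IH2 _ (mem_head _ _)).
  + by [].
  + by apply: ltnW; apply: leq_trans H (IH2 _ _); rewrite inE Hu orbT.
- by move: IH1; rewrite !inE => /orP[->|->]; rewrite ?orbT.
- move=> u; rewrite !inE => /or3P[/eqP->|/eqP->|Hu].
  + by apply: IH2; rewrite mem_head.
  + by rewrite leqNgt H.
  + by apply: IH2; rewrite inE Hu orbT.
Qed.

Definition rots w := w :: [seq rot k w | k <- iota 0 (size w)].

Lemma rotsP u w : u \in rots w <-> exists i, u = rot i w.
Proof.
split.
- rewrite inE => /orP[/eqP->|/mapP[k _ ->]]; [exists 0%N; by rewrite rot0| by exists k].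
- case=> i ->; case: (leqP (size w) i) => Hi; first by rewrite rot_oversize // mem_head.
  by rewrite inE; apply/orP; right; apply/mapP; exists i; rewrite // mem_iota.
Qed.

Lemma rot_rot_ex k j w : exists i, rot k (rot j w) = rot i w.
Proof.
case: (leqP (size w) j) => Hj; first by exists k; rewrite (rot_oversize Hj).
case: (leqP (size w) k) => Hk; first by exists j; rewrite rot_oversize // size_rot.
case: (leqP (k + j) (size w)) => Hkj; first by exists (k + j)%N; rewrite rotD.
exists (k - (size w - j))%N.
have Hle : (size w - j <= k)%N by rewrite leq_subLR addnC ltnW.
have Ek : k = ((k - (size w - j)) + (size w - j))%N by rewrite subnK.
have Hw : rot (size w - j) (rot j w) = w.
  rewrite rot_rot -rotD; last by rewrite subnKC // ltnW.
  by rewrite subnKC ?rot_size // ltnW.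
rewrite {1}Ek rotD; last by rewrite -Ek size_rot ltnW.
by rewrite Hw.
Qed.

Lemma cyc_rep_rots w : cyc_rep w \in rots w.
Proof. exact: (key_min_spec _ _).1. Qed.

Lemma cyc_rep_rot w : exists j, cyc_rep w = rot j w.
Proof. exact/rotsP/cyc_rep_rots. Qed.

Lemma size_cyc_rep w : size (cyc_rep w) = size w.
Proof. by case: (cyc_rep_rot w) => j ->; rewrite size_rot. Qed.

Lemma cyc_rep_id w : cyc_rep (cyc_rep w) = cyc_rep w.
Proof.
case: (cyc_rep_rot w) => j Hj.
have sub : forall u, u \in rots (cyc_rep w) -> u \in rots w.
  move=> u /rotsP[i ->]; rewrite Hj; case: (rot_rot_ex i j w) => i' ->.
  by apply/rotsP; exists i'.
have [A1 A2] := key_min_spec (cyc_rep w) [seq rot k (cyc_rep w) | k <- iota 0 (size (cyc_rep w))].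
have [B1 B2] := key_min_spec w [seq rot k w | k <- iota 0 (size w)].
apply: (pcan_inj (@choice.pickleK _)); apply/eqP; rewrite eqn_leq; apply/andP; split.
- exact: (A2 _ (mem_head _ _)).
- exact: (B2 _ (sub _ A1)).
Qed.

Lemma cyc_zero_rep w : cyc_zero (cyc_rep w) = cyc_zero w.
Proof. by case: (cyc_rep_rot w) => j ->; rewrite cyc_zero_rotE. Qed.

Definition kle (u v : word n) := (wkey u <= wkey v)%N.

Lemma ins_perm u s : perm_eq (ins u s).2 (u :: s).
Proof.
elim: s => [|v s IH] //=; case: ifP => _ //.
case E: (ins u s) IH => [b t] /= IH.
by rewrite -(perm_cons v) in IH; apply: (perm_trans IH); apply/permP => p /=; rewrite addnCA.
Qed.

Lemma ins_path x u s : kle x u -> path kle x s -> path kle x (ins u s).2.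
Proof.
elim: s x => [|v s IH] x /= Hxu; first by rewrite Hxu.
case/andP=> Hxv Hp; case: ifP => H.
  case E: (ins u s) (IH v (ltnW H) Hp) => [b t] /= ->; by rewrite Hxv.
by rewrite /= Hxu Hp andbT /kle leqNgt H.
Qed.

Lemma ins_sorted u s : sorted kle s -> sorted kle (ins u s).2.
Proof.
case: s => [|v s] //= Hp; case: ifP => H.
  case E: (ins u s) (@ins_path v u s (ltnW H) Hp) => [b t] //=.
by rewrite /= /kle leqNgt H Hp.
Qed.

Lemma ssort_spec s : perm_eq (ssort s).2 s /\ sorted kle (ssort s).2.
Proof.
elim: s => [|u s [IH1 IH2]] //=.
case E: (ssort s) IH1 IH2 => [b t] /= IH1 IH2.
case E2: (ins u t) (ins_perm u t) (@ins_sorted u t IH2) => [b' t'] /= P S; split=> //.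
by apply: (perm_trans P); rewrite perm_cons.
Qed.

Lemma cyc_rep_nil w : (cyc_rep w == [::]) = (w == [::]).
Proof. by rewrite -!size_eq0 size_cyc_rep. Qed.

Lemma norm_lam c g k (ws : seq (word n)) (m' : mono n) :
  m' \in msupp (norm c (g, k, ws)) ->
  [|| (0 < g + k)%N, (1 < size ws)%N | has (fun w : word n => size w != 1%N) ws] ->
  lam_mono m'.
Proof.
rewrite /norm.
set cs := map (@cyc n) ws.
set ne := [seq p.2 | p <- cs & p.2 != [::]].
set k' := (k + count (fun p => p.2 == [::]) cs)%N.
have [Hperm Hsort] := ssort_spec ne.
case E: (ssort ne) Hperm Hsort => [b srt] /= Hperm Hsort.
case: ifP => Hz; first by rewrite msupp0.
rewrite msuppU; case: ifP => Hc; first by rewrite inE.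
rewrite inE => /eqP -> Hcond.
move/negbT: Hc; rewrite mulf_eq0 negb_or => /andP[Hc _].
move: Hc; rewrite mulf_eq0 negb_or => /andP[_ Hc].
have Hnz : forall w, w \in ws -> ~~ cyc_zero w.
  move: Hc; rewrite prodf_seq_neq0 /cs all_map => /allP H w Hw.
  by have := H w Hw; rewrite /= /cyc; case: (cyc_zero w); rewrite ?eqxx.
have Hne : forall u, u \in ne -> exists2 w, w \in ws & u = cyc_rep w /\ w != [::].
  move=> u /mapP[p]; rewrite mem_filter => /andP[Hp /mapP[w Hw Ep]] ->; subst p.
  by exists w => //; split => //; rewrite -cyc_rep_nil.
have Hcnt : count (fun p => p.2 == [::]) cs = count (fun w : word n => w == [::]) ws.
  by rewrite /cs count_map; apply: eq_count => w; rewrite /= cyc_rep_nil.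
have Hsz : size srt = (size ws - count (fun w : word n => w == [::]) ws)%N.
  rewrite (perm_size Hperm) size_map size_filter -Hcnt.
  have := count_predC (fun p => p.2 == [::]) cs; rewrite {3}/cs size_map => <-.
  by rewrite addKn.
move/negbT: Hz; rewrite negb_or => /andP[Hsrt0 Hrep].
rewrite /lam_mono /normal Hsrt0 Hrep Hsort /= andbT.
apply/andP; split.
  apply/allP=> u; rewrite (perm_mem Hperm) => /Hne [w Hw [-> Hw0]].
  by rewrite cyc_rep_nil Hw0 cyc_rep_id eqxx cyc_zero_rep Hnz.
have [Hs1|Hs1] := ltnP 1 (size srt); first by apply/orP; left.
have [Hgk|Hgk] := posnP (g + k'); last by apply/or3P; apply: Or33.
move: Hgk; rewrite /k' addnA => /eqP; rewrite addn_eq0 => /andP[Hgk Hc0].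
rewrite Hcnt in Hc0; rewrite (eqP Hc0) subn0 in Hsz.
move: Hcond; rewrite (eqP Hgk) ltnn -Hsz ltnNge Hs1 /= => /hasP[w Hw Hw1].
have Hw0 : w != [::].
  apply/negP=> /eqP Hw0.
  have : (0 < count (fun w : word n => w == [::]) ws)%N.
    by rewrite -has_count; apply/hasP; exists w => //; rewrite Hw0.
  by rewrite (eqP Hc0).
case: srt Hs1 Hsz Hperm Hsrt0 {Hsort Hrep E} => [//|x [|y t]] //= _ Hsz Hperm _.
have : x \in ne by rewrite -(perm_mem Hperm) mem_head.
case/Hne=> w' Hw' [-> _].
case: ws Hw Hw' Hsz {Hc Hnz Hne Hcnt Hc0 cs ne k' Hperm} => [//|w1 [|//]] Hw Hw' _.
move: Hw Hw'; rewrite !inE => /eqP Ew /eqP Ew'; subst w w'.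
rewrite orbF size_cyc_rep.
by move: Hw0 Hw1; case: (w1) => [|? [|]].
Qed.

Arguments norm_lam {c g k ws m'}.
Definition good (P : mono n -> bool) (X : lalg n) := forall m, m \in msupp X -> P m.
Lemma good_all P X : good P X <-> all P (enum_fset (msupp X)).
Proof. split=> [H|/allP H m Hm]; [apply/allP=> m Hm; exact: H| exact: H]. Qed.
Lemma good0 P : good P 0.
Proof. by move=> m; rewrite msupp0. Qed.
Lemma goodD P X Y : good P X -> good P Y -> good P (X + Y).
Proof. move=> HX HY m /(fsubsetP (msuppD_le _ _)); rewrite inE => /orP[]; [exact: HX|exact: HY]. Qed.
Lemma goodZ P c X : good P X -> good P (c *: X).
Proof. move=> HX m /(fsubsetP (msuppZ_le _ _)); exact: HX. Qed.
Lemma good_sum P (I : eqType) (s : seq I) (F : I -> lalg n) :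
  (forall i, i \in s -> good P (F i)) -> good P (\sum_(i <- s) F i).
Proof.
elim: s => [|a s IH] H; first by rewrite big_nil; exact: good0.
rewrite big_cons; apply: goodD; first by apply: H; rewrite inE eqxx.
by apply: IH => i Hi; apply: H; rewrite inE Hi orbT.
Qed.
Lemma good_sumc P (I : eqType) (s : seq I) (Q : pred I) (F : I -> lalg n) :
  (forall i, i \in s -> Q i -> good P (F i)) -> good P (\sum_(i <- s | Q i) F i).
Proof.
move=> H; rewrite big_mkcond /=; apply: good_sum => i Hi.
by case: ifP => Hq; [exact: H| exact: good0].
Qed.

Lemma size_rem_at i (s : seq (word n)) : (i < size s)%N -> size (rem_at i s) = (size s).-1.
Proof.
move=> Hi; rewrite /rem_at size_cat size_take Hi size_drop.
by rewrite -subn1; lia.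
Qed.

Lemma hbr_size (a b : word n) t : t \in hbr a b -> size t.2 = ((size a).-1 + (size b).-1)%N.
Proof.
case/allpairsP=> [[i j] [_ _ ->]] /=.
by rewrite size_cat size_takel ?size_rot ?leq_pred // size_behead size_rot.
Qed.

Arguments hbr_size {a b t}.

Lemma mbr_lam (m1 m2 : mono n) : lam_mono m1 -> lam_mono m2 -> good (@lam_mono n) (mbr m1 m2).
Proof.
case: m1 => [[g1 k1] ws]; case: m2 => [[g2 k2] vs] H1 H2.
rewrite /mbr; apply: good_sum => i; rewrite mem_iota add0n => /andP[_ Hi].
apply: good_sum => j; rewrite mem_iota add0n => /andP[_ Hj].
apply: good_sum => t Ht m Hm; apply: (norm_lam Hm).
have [Hp|H0] := posnP (g1 + g2 + (k1 + k2)); last by apply/orP; left.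
move: Hp => /eqP; rewrite !addn_eq0 => /andP[/andP[/eqP G1 /eqP G2] /andP[/eqP K1 /eqP K2]].
subst; move: H1 H2 => /andP[_ H1] /andP[_ H2].
rewrite /= in H1 H2.
apply/orP; right; rewrite size_cat /= size_rem_at // size_rem_at //.
have [Hw|Hw] := ltnP 1 (size ws).
  apply/orP; left; rewrite addnS ltnS; apply: leq_trans (leq_addr _ _).
  by rewrite -ltnS prednK // ltnW.
have [Hv|Hv] := ltnP 1 (size vs).
  apply/orP; left; rewrite addnS ltnS; apply: leq_trans (leq_addl _ _).
  by rewrite -ltnS prednK // ltnW.
have Ew : size ws = 1%N by apply/eqP; rewrite eqn_leq Hw; case: (size ws) Hi.
have Ev : size vs = 1%N by apply/eqP; rewrite eqn_leq Hv; case: (size vs) Hj.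
move: H1 H2; rewrite Ew Ev /= => H1 H2.
apply/hasP; exists t.2; first by rewrite mem_cat inE eqxx orbT.
rewrite (hbr_size Ht).
have -> : i = 0%N by move: Hi; rewrite Ew ltnS leqn0 => /eqP.
have -> : j = 0%N by move: Hj; rewrite Ev ltnS leqn0 => /eqP.
clear Hm Ht Hw Hv; case: ws Ew H1 Hi => [|u [|]] //= _ H1 _; case: vs Ev H2 Hj => [|v [|]] //= _ H2 _.
rewrite orbF in H1 H2; lia.
Qed.

Lemma mdelta_lam (m : mono n) : good (@lam_mono n) (mdelta m).
Proof.
case: m => [[g k] ws]; rewrite /mdelta; apply: good_sum => i _.
apply: good_sumc => j _ _; apply: good_sum => t _ m Hm; apply: (norm_lam Hm).
by rewrite addSn.
Qed.

Lemma mDelta_lam (m : mono n) : good (@lam_mono n) (mDelta m).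
Proof.
case: m => [[g k] ws]; rewrite /mDelta; apply: good_sum => i _.
apply: good_sum => t _ m Hm; apply: (norm_lam Hm).
by rewrite size_cat /= !addnS orbT.
Qed.

End W.

Theorem theorem3p5 (n : nat) :
  (* Lambda is a Q-linear subspace of l' *)
  (forall X : lalg n, in_Lambda X -> in_l' X) /\
  in_Lambda (0 : lalg n) /\
  (forall (c : rat) (X Y : lalg n),
      in_Lambda X -> in_Lambda Y -> in_Lambda (c *: X + Y)) /\
  (* closed under the bracket of l' *)
  (forall X Y : lalg n, in_Lambda X -> in_Lambda Y -> in_Lambda (lbr X Y)) /\
  (* closed under the differential d = gamma delta + Delta of l' *)
  (forall X : lalg n, in_Lambda X -> in_Lambda (ldiff X)).
Proof.
have E : forall X : lalg n, in_Lambda X <-> @good n (@lam_mono n) X.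
  by move=> X; rewrite good_all.
split.
  move=> X /allP H; apply/allP=> m /H; case: m => [[g k] ws] /andP[] //.
split; first by apply/E; apply: good0.
split.
  by move=> c X Y /E HX /E HY; apply/E; apply: goodD => //; apply: goodZ.
split.
  move=> X Y /allP HX /allP HY; apply/E; rewrite /lbr.
  apply: good_sum => m1 Hm1; apply: good_sum => m2 Hm2; apply: goodZ.
  by apply: mbr_lam; [apply: HX | apply: HY].
move=> X _; apply/E; rewrite /ldiff; apply: good_sum => m _; apply: goodZ.
by apply: goodD; [apply: mdelta_lam | apply: mDelta_lam].
Qed.
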